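(* Let $G=(V,E,w)$ be a graph with $V\ne\emptyset$, positive integer vertex weights and maximum degree $\Delta\ge1$. Let $1\le\alpha\le\Delta$ and $\gamma=\lceil\sqrt{2\Delta\alpha}\,\rceil$, assume $\gamma\le\Delta$, and suppose $G$ is a $\gamma$-stable instance of \texttt{MIS} with maximum weight independent set $I^*$. Let $I$ be an independent set with $w(I)\ge w(I^* )/\alpha$, and let $S=\texttt{PURIFY}(G,I,\gamma)$. If $I\ne I^*$, then (1) $S\ne\emptyset$ and (2) $S\subseteq I^*$.
   Context: \texttt{MIS}: given a graph $G=(V,E)$ with weights $w:V\to\mathbb{R}_{>0}$, find an independent set maximizing $w(I)=\sum_{u\in I}w_u$; $w(X)=\sum_{u\in X}w_u$. For $\gamma\ge1$, a $\gamma$-perturbation of $w$ is any $w'$ with $w_u\le w'_u\le\gamma w_u$ for all $u$. The instance is $\gamma$-stable if it has a unique maximum weight independent set $I^*$ and $I^*$ remains the unique maximum weight independent set under every $\gamma$-perturbation of $w$. The procedure $\texttt{PURIFY}(G,I,\gamma)$ (for integer weights, integer $\gamma\ge1$ and independent set $I$): build an unweighted bipartite graph $G_0=(L\cup R,E_0)$ where $L$ contains $\gamma\cdot w(u)$ copies of each $u\in I$ and $R$ contains $w(v)$ copies of each $v\in V\setminus I$; for every edge $(u,v)\in E$ with $u\in I$, $v\notin I$, join every copy of $u$ in $L$ to every copy of $v$ in $R$. Compute a maximum cardinality matching $M$ of $G_0$ and return the set of all $u\in I$ having at least one copy in $L$ unmatched by $M$. *)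

(* Defs.v *)
From HB Require Import structures.
From mathcomp Require Import all_boot all_order all_algebra.
Set Implicit Arguments. Unset Strict Implicit. Unset Printing Implicit Defensive.
Import Order.TTheory GRing.Theory Num.Theory.

Definition simple_graph (T : finType) (e : rel T) : Prop :=
  symmetric e /\ irreflexive e.

Definition deg (T : finType) (e : rel T) (v : T) : nat := #|[set u | e v u]|.
Definition maxdeg (T : finType) (e : rel T) : nat := \max_(v : T) deg e v.

Definition independent (T : finType) (e : rel T) (I : {set T}) : bool :=
  [forall u in I, forall v in I, ~~ e u v].

Definition wsum (R : numDomainType) (T : finType) (w : T -> R) (X : {set T}) : R :=
  (\sum_(u in X) w u)%R.

Definition perturbation (R : numDomainType) (T : finType) (w : T -> nat)
    (gamma : nat) (w' : T -> R) : Prop :=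
  forall u, ((w u)%:R <= w' u <= gamma%:R * (w u)%:R)%R.

Definition stable_with (R : numDomainType) (T : finType) (e : rel T)
    (w : T -> nat) (gamma : nat) (Istar : {set T}) : Prop :=
  independent e Istar /\
  forall w' : T -> R, perturbation w gamma w' ->
    forall J : {set T}, independent e J -> J != Istar ->
      (wsum w' J < wsum w' Istar)%R.

(* Copies are pairs (vertex, index). *)
Definition Lcopy (T : finType) (w : T -> nat) (I : {set T}) (gamma : nat)
    (c : T * nat) : bool := (c.1 \in I) && (c.2 < gamma * w c.1).
Definition Rcopy (T : finType) (w : T -> nat) (I : {set T}) (c : T * nat) : bool :=
  (c.1 \notin I) && (c.2 < w c.1).

Definition G0_matching (T : finType) (e : rel T) (w : T -> nat) (I : {set T})
    (gamma : nat) (M : seq ((T * nat) * (T * nat))) : bool :=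
  all (fun p => [&& Lcopy w I gamma p.1, Rcopy w I p.2 & e p.1.1 p.2.1]) M
  && uniq (map fst M) && uniq (map snd M).

Definition G0_max_matching (T : finType) (e : rel T) (w : T -> nat) (I : {set T})
    (gamma : nat) (M : seq ((T * nat) * (T * nat))) : Prop :=
  G0_matching e w I gamma M /\
  forall M', G0_matching e w I gamma M' -> size M' <= size M.

Definition purify_out (T : finType) (w : T -> nat) (I : {set T}) (gamma : nat)
    (M : seq ((T * nat) * (T * nat))) : {set T} :=
  [set u in I | [exists i : 'I_(gamma * w u), (u, val i) \notin map fst M]].

(* Main.v *)
Require Import Defs.
From HB Require Import structures.
From mathcomp Require Import all_boot all_order all_algebra.
From mathcomp Require Import zify ring lra.
From Stdlib Require Import Classical ClassicalEpsilon.
Import Order.TTheory GRing.Theory Num.Theory.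
Set Implicit Arguments. Unset Strict Implicit. Unset Printing Implicit Defensive.


Lemma uniq_map_eq (A B : eqType) (f : A -> B) (s : seq A) x y :
  uniq (map f s) -> x \in s -> y \in s -> f x = f y -> x = y.
Proof.
elim: s => //= a s IH /andP[fa us]; rewrite !inE.
case/predU1P=> [->|xs]; case/predU1P=> [->|ys] //= fe.
- by move: fa; rewrite fe map_f.
- by move: fa; rewrite -fe map_f.
- exact: IH.
Qed.

Definition copies (T : eqType) (s : seq T) (f : T -> nat) : seq (T * nat) :=
  flatten [seq [seq (a, j) | j <- iota 0 (f a)] | a <- s].

Lemma mem_copies (T : eqType) (s : seq T) f x j :
  ((x, j) \in copies s f) = (x \in s) && (j < f x).
Proof.
elim: s => //= a s IH; rewrite mem_cat IH inE.
have -> : ((x, j) \in [seq (a, j0) | j0 <- iota 0 (f a)]) = (x == a) && (j < f a).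
  apply/mapP/andP => [[j' hj [-> ->]]|[/eqP -> hj]].
    by rewrite mem_iota in hj; split.
  by exists j; rewrite // mem_iota.
by case: eqP => [->|] //=; case: (a \in s); rewrite ?orbb ?orbF.
Qed.

Lemma size_copies (T : eqType) (s : seq T) f :
  size (copies s f) = \sum_(a <- s) f a.
Proof. by elim: s => [|a s IH]; rewrite ?big_nil ?big_cons //= size_cat size_map size_iota IH. Qed.

Lemma uniq_copies (T : eqType) (s : seq T) f : uniq s -> uniq (copies s f).
Proof.
elim: s => //= a s IH /andP[as_ us]; rewrite cat_uniq IH // andbT.
apply/andP; split.
  by rewrite map_inj_uniq ?iota_uniq // => j1 j2 [].
apply/hasP => [[[x j] h1 /mapP [j' _ [xa _]]]].
by move: h1; rewrite mem_copies xa (negbTE as_).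
Qed.

Definition pbool (P : Prop) : bool := if excluded_middle_informative P then true else false.
Lemma pboolP (P : Prop) : reflect P (pbool P).
Proof. by rewrite /pbool; case: excluded_middle_informative => h; constructor. Qed.

Lemma indepP (T : finType) (e : rel T) (I : {set T}) x y :
  independent e I -> x \in I -> y \in I -> ~~ e x y.
Proof. by move=> /forallP/(_ x)/implyP h xI yI; move: (h xI) => /forallP/(_ y)/implyP; apply. Qed.

Section Aug.
Variables (T : finType) (e : rel T) (w : T -> nat) (I : {set T}) (g : nat).
Definition adj (l r : T * nat) := [&& Lcopy w I g l, Rcopy w I r & e l.1 r.1].

Fixpoint reach (M : seq ((T * nat) * (T * nat))) (l0 : T * nat) (k : nat) (l : T * nat) : Prop :=
  if k is k'.+1 then reach M l0 k' l \/
     exists l' r', [/\ reach M l0 k' l', adj l' r' & (l, r') \in M]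
  else l = l0.

Lemma reach_transfer M M1 l0 l k x : ~ reach M l0 k l ->
  (forall a b, (a, b) \in M -> a != l -> (a, b) \in M1) ->
  reach M l0 k x -> reach M1 l0 k x.
Proof.
move=> nl hM; elim: k x nl => [|k IH] x /= nl; first by [].
have nlk : ~ reach M l0 k l by move=> h; apply nl; left.
case=> [h|[l' [r' [h1 h2 h3]]]]; first by left; exact: IH.
right; exists l', r'; split => //; first exact: IH.
apply (hM _ _ h3); apply/eqP => xl; rewrite xl in h3; apply nl; right; exists l', r'; by split.
Qed.

Lemma reach_L M l0 k l : G0_matching e w I g M -> Lcopy w I g l0 -> reach M l0 k l -> Lcopy w I g l.
Proof.
move=> /andP[/andP[/allP mall _] _] hl0; elim: k l => [|k IH] l /=; first by move->.
case=> [|[l' [r' [_ _ h3]]]]; first exact: IH.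
by case/and3P: (mall _ h3).
Qed.

Lemma augment k : forall M l0 l r, G0_matching e w I g M -> l0 \notin map fst M ->
  reach M l0 k l -> adj l r -> r \notin map snd M ->
  exists M', G0_matching e w I g M' /\ size M' = (size M).+1.
Proof.
elim: k => [|k IH] M l0 l r mM l0n /= hr alr rn.
  subst l; exists ((l0, r) :: M); split => //.
  move: mM => /andP[/andP[mall mu1] mu2].
  by rewrite /G0_matching /= mall mu1 mu2 l0n rn; move: alr; rewrite /adj => ->.
case: (classic (reach M l0 k l)) => hk.
  case: hr => [hr|_]; first exact: IH hr alr rn.
  exact: IH hk alr rn.
case: hr => [//|[l' [r' [h1 h2 h3]]]].
move: (mM) => /andP[/andP[/allP mall mu1] mu2].
set M1 := (l, r) :: [seq p <- M | p.1 != l].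
have lM : l \in map fst M by apply/mapP; exists (l, r').
have rM : r' \in map snd M by apply/mapP; exists (l, r').
have fsub : forall x, x \in map fst [seq p <- M | p.1 != l] -> (x \in map fst M) && (x != l).
  by move=> x /mapP [p]; rewrite mem_filter => /andP[pl pM] ->; rewrite map_f.
have ssub : forall x, x \in map snd [seq p <- M | p.1 != l] -> x \in map snd M.
  by move=> x /mapP [p]; rewrite mem_filter => /andP[pl pM] ->; rewrite map_f.
have mM1 : G0_matching e w I g M1.
  rewrite /G0_matching /=; apply/andP; split; [apply/andP; split|].
  - rewrite -/(adj l r) alr /=; apply/allP => p; rewrite mem_filter => /andP[_]; exact: mall.
  - apply/andP; split.
      by apply/negP => /fsub; rewrite eqxx andbF.
    exact: subseq_uniq (map_subseq _ (filter_subseq _ _)) mu1.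
  - apply/andP; split.
      by apply/negP => /ssub; rewrite (negbTE rn).
    exact: subseq_uniq (map_subseq _ (filter_subseq _ _)) mu2.
have l0n1 : l0 \notin map fst M1.
  rewrite /= inE negb_or; apply/andP; split.
    by apply/eqP => h; move: l0n; rewrite h lM.
  by apply/negP => /fsub /andP[]; rewrite (negbTE l0n).
have hr1 : reach M1 l0 k l'.
  apply: reach_transfer hk _ h1 => a b hab al.
  by rewrite inE mem_filter /= al hab orbT.
have rn1 : r' \notin map snd M1.
  rewrite /= inE negb_or; apply/andP; split.
    by apply/eqP => h; move: rn; rewrite -h rM.
  apply/negP => /mapP [p]; rewrite mem_filter => /andP[pl pM] hp.
  have := uniq_map_eq mu2 pM h3; rewrite /= -hp => /(_ erefl) hpe.
  by move: pl; rewrite hpe eqxx.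
have [M' [mM' sM']] := IH M1 l0 l' r' mM1 l0n1 hr1 h2 rn1.
exists M'; split => //; rewrite sM' /= size_filter.
have c1 : count (fun p => p.1 == l) M = 1.
  by rewrite -(count_map fst (pred1 l)) count_uniq_mem // lM.
have := count_predC (fun p : (T * nat) * (T * nat) => p.1 == l) M.
rewrite c1 => <-.
by congr (_.+2); apply: eq_count => p.
Qed.
End Aug.


Lemma stab_base (R : realFieldType) (T : finType) (e : rel T) (w : T -> nat) g
   (Istar J : {set T}) :
  0 < g -> stable_with R e w g Istar -> independent e J -> J != Istar ->
  (g * \sum_(u in J :\: Istar) w u < \sum_(u in Istar :\: J) w u)%N.
Proof.
move=> g0 [_ hs] iJ nJ.
pose w' u : R := (if u \in J :\: Istar then g%:R * (w u)%:R else (w u)%:R)%R.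
have g1 : (1 <= g%:R :> R)%R by rewrite ler1n.
have pw : perturbation w g w'.
  move=> u; rewrite /w'; have w0 : (0 <= (w u)%:R :> R)%R by [].
  case: ifP => _; apply/andP; split; nra.
have := hs w' pw J iJ nJ; rewrite /wsum.
rewrite (big_setID Istar) [X in (_ < X)%R](big_setID J) /=.
have -> : (\sum_(i in J :\: Istar) w' i = g%:R * \sum_(i in J :\: Istar) (w i)%:R)%R.
  by rewrite big_distrr; apply: eq_bigr => i; rewrite /w' => ->.
have -> : (\sum_(i in J :&: Istar) w' i = \sum_(i in Istar :&: J) (w i)%:R)%R.
  rewrite setIC; apply: eq_bigr => i; rewrite /w' !inE => /andP[-> _] //.
have -> : (\sum_(i in Istar :&: J) w' i = \sum_(i in Istar :&: J) (w i)%:R)%R.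
  apply: eq_bigr => i; rewrite /w' !inE => /andP[-> _]; by rewrite ?andbF.
have -> : (\sum_(i in Istar :\: J) w' i = \sum_(i in Istar :\: J) (w i)%:R)%R.
  apply: eq_bigr => i; rewrite /w' !inE => /andP[_ ->]; by rewrite ?andbF.
rewrite ltrD2l => h.
by rewrite -(ltr_nat R) natrM !natr_sum.
Qed.

Definition nbr (T : finType) (e : rel T) (A : {set T}) : {set T} :=
  [set v | [exists a in A, e a v]].

Lemma stab_set (R : realFieldType) (T : finType) (e : rel T) (w : T -> nat) g
   (Istar A : {set T}) a0 :
  symmetric e -> 0 < g -> stable_with R e w g Istar -> independent e A ->
  a0 \in A -> (forall x, x \in A -> x \notin Istar) ->
  (g * \sum_(a in A) w a < \sum_(v in Istar :&: nbr e A) w v)%N.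
Proof.
move=> sym g0 hst iA a0A dis.
have iS : independent e Istar by case: hst.
set J := (Istar :\: nbr e A) :|: A.
have h1 : J :\: Istar = A.
  apply/setP => x; rewrite !inE; case xA: (x \in A); case xI: (x \in Istar); rewrite /= ?orbT ?orbF ?andbF //.
  by move: (dis _ xA); rewrite xI.
have h2 : Istar :\: J = Istar :&: nbr e A.
  apply/setP => x; rewrite !inE; case xI: (x \in Istar); rewrite ?andbF ?andbT //=.
  have -> : (x \in A) = false by apply/negP => /dis; rewrite xI.
  by rewrite orbF negbK.
have iJ : independent e J.
  apply/forallP => x; apply/implyP => xJ; apply/forallP => y; apply/implyP => yJ.
  move: xJ yJ; rewrite !inE.
  case/orP=> [/andP[xn xI]|xA]; case/orP=> [/andP[yn yI]|yA].
  - exact: indepP iS xI yI.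
  - apply/negP => exy; move: xn; case/negP; apply/existsP; exists y.
    by rewrite yA sym.
  - apply/negP => exy; move: yn; case/negP; apply/existsP; exists x.
    by rewrite xA.
  - exact: indepP iA xA yA.
have nJ : J != Istar.
  apply/eqP => hJ; have : a0 \in J by rewrite !inE a0A orbT.
  by rewrite hJ (negbTE (dis _ a0A)).
have := stab_base g0 hst iJ nJ.
by rewrite h1 h2.
Qed.


Section Arith.
Local Open Scope ring_scope.
Lemma arith1 (R : realFieldType) (G D a Wn Ws : R) : 1 <= a -> 1 <= D -> 0 <= G -> G <= D ->
  2 * D * a <= G ^+ 2 -> G * Wn <= Ws -> Ws <= Wn * a -> 0 < Ws -> False.
Proof.
move=> a1 D1 G0 GD h2 h1 h3 h4.
have Wn0 : 0 < Wn by nra.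
have Ga : G <= a by nra.
have f1 : G * G <= a * G by rewrite ler_wpM2r.
have f2 : a * G <= a * D by rewrite ler_wpM2l //; lra.
rewrite expr2 in h2.
nra.
Qed.

Lemma arith2 (R : realFieldType) (G D a Wn Ws : R) : 1 <= a -> 1 <= D -> 0 <= G -> G <= D ->
  2 * D * a <= G ^+ 2 -> G * (G * Wn) < G * Ws + D * Ws -> Ws <= Wn * a -> 0 < Ws -> False.
Proof.
move=> a1 D1 G0 GD h2 h1 h3 h4.
have Wn0 : 0 < Wn by nra.
have e1 : (G + D) * Ws <= (G + D) * (Wn * a) by nra.
have e2 : (G + D) * a <= G ^+ 2 by nra.
have e3 : (G + D) * a * Wn <= G ^+ 2 * Wn by nra.
rewrite expr2 in e3.
nra.
Qed.
End Arith.

Lemma sub_sum (T : finType) (w : T -> nat) (A B : {set T}) :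
  \sum_(x in A :&: B) w x <= \sum_(x in A) w x.
Proof. by rewrite [X in _ <= X](big_setID B) leq_addr. Qed.

Lemma indep1 (T : finType) (e : rel T) v : irreflexive e -> independent e [set v].
Proof.
move=> irr; apply/forallP => x; apply/implyP; rewrite inE => /eqP ->.
by apply/forallP => y; apply/implyP; rewrite inE => /eqP ->; rewrite irr.
Qed.

Lemma nbr1 (T : finType) (e : rel T) v : nbr e [set v] = [set x | e v x].
Proof.
apply/setP => x; rewrite !inE; apply/existsP/idP => [[a /andP[]]|h].
  by rewrite inE => /eqP ->.
by exists v; rewrite inE eqxx h.
Qed.

Lemma sum_nbr1 (T : finType) (e : rel T) (w : T -> nat) (S : {set T}) v :
  \sum_(x in S :&: nbr e [set v]) w x = \sum_(x in S) (if e v x then w x else 0).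
Proof.
rewrite -big_mkcondr; apply: eq_bigl => x; by rewrite nbr1 !inE.
Qed.

Theorem mainTheorem7 (R : realFieldType) (T : finType) (e : rel T)
    (w : T -> nat) (alpha : R) (gamma : nat) (Istar I : {set T})
    (M : seq ((T * nat) * (T * nat))) :
  simple_graph e ->
  0 < #|T| ->
  (forall u, 0 < w u) ->
  1 <= maxdeg e ->
  (1 <= alpha <= (maxdeg e)%:R)%R ->
  (* gamma = ceil (sqrt (2 * Delta * alpha)) *)
  ((gamma.-1)%:R ^+ 2 < 2%:R * (maxdeg e)%:R * alpha <= gamma%:R ^+ 2)%R ->
  gamma <= maxdeg e ->
  stable_with R e w gamma Istar ->
  independent e I ->
  ((\sum_(u in Istar) w u)%:R / alpha <= (\sum_(u in I) w u)%:R)%R ->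
  G0_max_matching e w I gamma M ->
  I != Istar ->
  purify_out w I gamma M != set0 /\ purify_out w I gamma M \subset Istar.
Proof.
move=> [sym irr] HT Hw HD /andP[Ha1 HaD] /andP[_ Hg2] HgD Hst HI HwI [Mm Mmax] HII.
set g := gamma in Hg2 HgD Hst Mm Mmax HD HaD *; set D := maxdeg e in Hg2 HgD HD HaD *.
have iS : independent e Istar by case: Hst.
have D1 : (1 <= D%:R :> R)%R by rewrite ler1n.
have g0 : 0 < g.
  rewrite lt0n; apply/eqP => g0'; move: Hg2; rewrite g0' expr2 mul0r => h.
  nra.
move: (Mm) => /andP[/andP[/allP mall mu1] mu2].
have part2 : purify_out w I g M \subset Istar.
  apply/subsetP => u; rewrite inE => /andP[uI /existsP[i ni]].
  apply: contraT => uIs.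
  set l0 := (u, val i).
  have Ll0 : Lcopy w I g l0 by rewrite /Lcopy /= uI ltn_ord.
  set A := [set a | [&& a \in I, a \notin Istar &
                      pbool (exists k j, reach e w I g M l0 k (a, j))]].
  have uA : u \in A.
    by rewrite inE uI uIs /=; apply/pboolP; exists 0, (val i).
  have disA : forall x, x \in A -> x \notin Istar by move=> x; rewrite inE => /and3P[].
  have iA : independent e A.
    apply/forallP => x; apply/implyP => xA; apply/forallP => y; apply/implyP => yA.
    by move: xA yA; rewrite !inE => /and3P[xI _ _] /and3P[yI _ _]; exact: indepP HI xI yI.
  have := stab_set sym g0 Hst iA uA disA.
  set Rs := copies (enum (Istar :&: nbr e A)) w.
  set Ls := copies (enum A) (fun a => g * w a).
  have key : forall v j, (v, j) \in Rs -> exists k l, reach e w I g M l0 k l /\ adj e w I g l (v, j).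
    move=> v j; rewrite mem_copies mem_enum !inE => /andP[/andP[vI /existsP[a /andP[aA eav]]] jw].
    move: aA; rewrite inE => /and3P[aI aIs /pboolP [k [ja hr]]].
    exists k, (a, ja); split => //.
    rewrite /adj (reach_L Mm Ll0 hr) /Rcopy /= jw eav andbT.
    rewrite ?andbT; apply/negP => vI'; have := indepP HI aI vI'; by rewrite eav.
  have matched : forall r, r \in Rs -> r \in map snd M.
    move=> [v j] hr; apply: contraT => rn.
    have [k [l [hk al]]] := key _ _ hr.
    have [M' [m' s']] := augment Mm ni hk al rn.
    by have := Mmax M' m'; rewrite s' ltnn.
  set MR := [seq p <- M | p.2 \in Rs].
  have s1 : size Rs <= size MR.
    rewrite -(size_map snd MR); apply: uniq_leq_size (uniq_copies _ (enum_uniq _)) _ => r hr.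
    have /mapP[p pM rp] := matched r hr.
    by apply/mapP; exists p => //; rewrite mem_filter -rp hr.
  have s2 : size MR <= size Ls.
    rewrite -(size_map fst MR); apply: uniq_leq_size.
      exact: subseq_uniq (map_subseq _ (filter_subseq _ _)) mu1.
    move=> x /mapP[[[a ja] [v j]]]; rewrite mem_filter /= => /andP[pR pM] ->.
    have [k [l [hk al]]] := key _ _ pR.
    have hr : reach e w I g M l0 k.+1 (a, ja) by right; exists l, (v, j); split.
    case/and3P: (mall _ pM) => /andP[/= aI jal] _ /= eav.
    move: pR; rewrite mem_copies mem_enum !inE => /andP[/andP[vIs _] _].
    rewrite mem_copies mem_enum inE aI jal /= andbT; apply/andP; split.
      by apply/negP => h; have := indepP iS h vIs; rewrite eav.
    by apply/pboolP; exists k.+1, ja.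
  rewrite /Rs /Ls !size_copies !big_enum /= -big_distrr /= in s1 s2.
  have := leq_trans s1 s2; rewrite /= => h1 h2.
  by have := leq_ltn_trans h1 h2; rewrite ltnn.
split; last exact: part2.
apply/negP => /eqP hS.
have allm : forall u j, u \in I -> j < g * w u -> (u, j) \in map fst M.
  move=> u j uI jl; have := in_set0 u; rewrite -hS inE uI /=.
  by move=> /existsPn /(_ (Ordinal jl)); rewrite negbK.
set NI := nbr e I.
set Wn := \sum_(u in I) w u.
set Ws := \sum_(u in Istar) w u.
have c1 : g * Wn <= \sum_(v in NI) w v.
  have a1 : size (copies (enum I) (fun u => g * w u)) <= size M.
    rewrite -(size_map fst M); apply: uniq_leq_size (uniq_copies _ (enum_uniq _)) _.
    by move=> [x j]; rewrite mem_copies mem_enum => /andP[]; exact: allm.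
  have a2 : size M <= size (copies (enum NI) w).
    rewrite -(size_map snd M); apply: uniq_leq_size mu2 _ => r /mapP[[[a ja] [v j]] pM ->] /=.
    case/and3P: (mall _ pM) => /andP[/= aI _] /andP[/= vI jw] /= eav.
    rewrite mem_copies mem_enum inE jw andbT; apply/existsP; exists a; by rewrite aI.
  rewrite !size_copies !big_enum /= in a1 a2; rewrite /Wn big_distrr; exact: leq_trans a1 a2.
set B := NI :\: Istar.
set Nin := \sum_(v in NI :&: Istar) w v.
set Nout := \sum_(v in B) w v.
have c1' : g * Wn <= Nin + Nout by rewrite -(big_setID Istar).
have c2 : Nin <= Ws by rewrite /Nin setIC sub_sum.
pose h v := \sum_(x in Istar) (if e v x then w x else 0).
have hf : forall v, v \notin Istar -> g * w v < h v.
  move=> v vI; rewrite /h -sum_nbr1.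
  have hh := stab_set (A := [set v]) (a0 := v) sym g0 Hst (indep1 v irr) (set11 v).
  rewrite big_set1 in hh; apply: hh => x; rewrite inE => /eqP ->; exact: vI.
have c3 : \sum_(v in B) h v <= D * Ws.
  rewrite /h exchange_big /= /Ws big_distrr /=; apply: leq_sum => x xI.
  apply: (@leq_trans (\sum_(v in [set y | e x y]) w x)).
    rewrite big_mkcond [X in _ <= X]big_mkcond /=; apply: leq_sum => v _.
    by rewrite !inE (sym v x); case: (e x v); case: ifP.
  rewrite sum_nat_const leq_mul2r; apply/orP; right.
  rewrite /D /maxdeg; exact: (@leq_bigmax T (deg e) x).
have Wspos : 0 < Ws.
  have /card_gt0P [v _] := HT.
  case vIs: (v \in Istar).
    by rewrite /Ws (bigD1 v) //= addn_gt0 Hw.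
  have := hf v (negbT vIs); have := sub_sum w Istar [set y | e v y].
  have -> : \sum_(x in Istar :&: [set y | e v y]) w x = h v.
    by rewrite -nbr1 sum_nbr1.
  move=> h1 h2; exact: leq_trans (leq_ltn_trans (leq0n _) h2) h1.
have HwR : ((Ws%:R : R) <= Wn%:R * alpha)%R.
  by rewrite -ler_pdivrMr // (lt_le_trans ltr01 Ha1).
have WsR : (0 < (Ws%:R : R))%R by rewrite ltr0n.
have gD : (g%:R <= D%:R :> R)%R by rewrite ler_nat.
have g1 : (1 <= g%:R :> R)%R by rewrite ler1n.
case: (set_0Vmem B) => [B0 | [v0 v0B]].
  have N0 : Nout = 0 by rewrite /Nout B0 big_set0.
  have : g * Wn <= Ws by rewrite N0 addn0 in c1'; exact: leq_trans c1' c2.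
  rewrite -(ler_nat R) natrM => h1.
  exact: (arith1 Ha1 D1 (ler0n _ _) gD Hg2 h1 HwR WsR).
have c4 : g * Nout < D * Ws.
  apply: (leq_trans _ c3).
  rewrite /Nout big_distrr /= (bigD1 v0) //= [X in _ < X](bigD1 v0) //=.
  have := hf v0; rewrite inE in v0B; case/andP: v0B => /negbTE -> _ => /(_ erefl) hv0.
  have : \sum_(i in B | i != v0) g * w i <= \sum_(i in B | i != v0) h i.
    apply: leq_sum => v /andP[vB _]; apply: ltnW; apply: hf; move: vB; rewrite !inE; by case/andP.
  by move=> hs; rewrite -addSn; exact: leq_add hv0 hs.
have c5 : g * (g * Wn) < g * Ws + D * Ws.
  have e1 : g * (g * Wn) <= g * (Nin + Nout) by rewrite leq_mul2l c1' orbT.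
  have e2 : g * Nin <= g * Ws by rewrite leq_mul2l c2 orbT.
  rewrite mulnDr in e1; apply: (leq_ltn_trans e1).
  by rewrite (addnC (g * Nin)) (addnC (g * Ws)) -addSn; exact: leq_add c4 e2.
move: c5; rewrite -(ltr_nat R) !natrD !natrM => h1.
exact: (arith2 Ha1 D1 (ler0n _ _) gD Hg2 h1 HwR WsR).
Qed.
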